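(* Let $K>3$, $V\ge1$, let $\phi_1,\dots,\phi_K\in\Delta_{V-1}$ have strictly positive entries, $p\in\Delta_{V-1}$, and $H(\theta)=\sum_{v=1}^Vp_v\log\big(\sum_{k=1}^K\theta_k\phi_k(v)\big)$. Let $\theta^*$ be a maximizer of $H$ on $\Delta_{K-1}$ with all coordinates strictly positive. Assume (B1): for every $v$, $\max_k\phi_k(v)$ is attained at a unique index $k(v)$; and that $\phi$ is $\varepsilon$-sparse with $\varepsilon<\varepsilon_0$. Then $$\rho^2:=\frac{|\det Q|^{1/2}|\det R|^{1/2}}{\left|\det\!\left(\frac{Q+R}{2}\right)\right|}\ \ge\ \exp(-C^2\varepsilon^2),$$ where $Q=\nabla^2H(\theta^* )$, $R=-\mathrm{diag}(1/\theta^*_1,\dots,1/\theta^*_K)$, and $C>0$ is a constant depending only on $\theta^*$, $K$ and $\varepsilon_0$.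
   Context: $\Delta_{d-1}=\{x\in\mathbb{R}^d:x_i\ge0,\sum_ix_i=1\}$. $\phi$ is $\varepsilon$-sparse if $\varepsilon=\max_v\frac{\sum_{j\ne k(v)}\phi_j(v)}{\phi_{k(v)}(v)}$. Let $\theta^*_{\min}=\min_k\theta^*_k$, $\theta^*_{\max}=\max_k\theta^*_k$, $C^{(1)}_{\max}=(\theta^*_{\max})^{1/2}/(\theta^*_{\min})^{3/2}$, $C^{(2)}_{\max}=\theta^*_{\max}/(\theta^*_{\min})^2$, and $F(\varepsilon)=4(C^{(2)}_{\max})^2K+K(K-1)\big(2C^{(1)}_{\max}+C^{(2)}_{\max}\varepsilon\big)^2$. The function $\varepsilon\mapsto\varepsilon\sqrt{F(\varepsilon)}$ is strictly increasing on $(0,\infty)$ and vanishes at $0$; $\varepsilon_0>0$ is the unique root of $\varepsilon\sqrt{F(\varepsilon)}=1/2$. *)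

(* Defs.v *)
From HB Require Import structures.
From mathcomp Require Import all_boot all_order all_algebra.
From mathcomp Require Import all_classical all_reals all_analysis.
Set Implicit Arguments. Unset Strict Implicit. Unset Printing Implicit Defensive.
Import Order.TTheory GRing.Theory Num.Theory.
Import numFieldNormedType.Exports.
Local Open Scope ring_scope.

Section Defs.
Variable R : realType.

Definition in_simplex (n : nat) (x : 'I_n -> R) : Prop :=
  (forall i, 0 <= x i) /\ \sum_(i < n) x i = 1.

Definition Hfun (K V : nat) (p : 'I_V -> R) (phi : 'I_K -> 'I_V -> R)
  (theta : 'I_K -> R) : R :=
  \sum_(v < V) p v * ln (\sum_(k < K) theta k * phi k v).

Definition shift2 (K : nat) (theta : 'I_K -> R) (i j : 'I_K) (s t : R) :
  'I_K -> R :=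
  fun k => theta k + s * (k == i)%:R + t * (k == j)%:R.

Definition hessH (K V : nat) (p : 'I_V -> R) (phi : 'I_K -> 'I_V -> R)
  (theta : 'I_K -> R) : 'M[R]_K :=
  \matrix_(i, j)
    derive1 (fun t => derive1 (fun s => Hfun p phi (shift2 theta i j s t)) 0) 0.

Definition Rmat (K : nat) (theta : 'I_K -> R) : 'M[R]_K :=
  \matrix_(i, j) (if i == j then - (theta i)^-1 else 0).

Definition rho2 (K : nat) (Q Rm : 'M[R]_K) : R :=
  Num.sqrt `|\det Q| * Num.sqrt `|\det Rm| / `|\det ((2%:R)^-1 *: (Q + Rm))|.

(* theta_min, theta_max (for theta in the simplex, every theta_k <= 1 and
   theta_k > 0, so the neutral elements 1 resp. 0 do not affect the value) *)
Definition theta_min (K : nat) (theta : 'I_K -> R) : R :=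
  \big[Num.min/1]_(k < K) theta k.
Definition theta_max (K : nat) (theta : 'I_K -> R) : R :=
  \big[Num.max/0]_(k < K) theta k.

Definition C1max (K : nat) (theta : 'I_K -> R) : R :=
  Num.sqrt (theta_max theta) / (theta_min theta * Num.sqrt (theta_min theta)).
Definition C2max (K : nat) (theta : 'I_K -> R) : R :=
  theta_max theta / (theta_min theta ^+ 2).

Definition Ffun (K : nat) (theta : 'I_K -> R) (eps : R) : R :=
  4%:R * (C2max theta) ^+ 2 * K%:R
  + K%:R * (K%:R - 1) * (2%:R * C1max theta + C2max theta * eps) ^+ 2.

Definition B1 (K V : nat) (phi : 'I_K -> 'I_V -> R) (kv : 'I_V -> 'I_K) : Prop :=
  forall v j, j != kv v -> phi j v < phi (kv v) v.

Definition sparsity (K V : nat) (phi : 'I_K -> 'I_V -> R) (kv : 'I_V -> 'I_K) : R :=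
  \big[Num.max/0]_(v < V)
    ((\sum_(j < K | j != kv v) phi j v) / phi (kv v) v).

End Defs.

(* Main.v *)
Require Import Defs.
From HB Require Import structures.
From mathcomp Require Import all_boot all_order all_algebra.
From mathcomp Require Import all_classical all_reals all_analysis.
From mathcomp Require Import spectral sesquilinear complex ring lra.
Set Implicit Arguments. Unset Strict Implicit. Unset Printing Implicit Defensive.
Import Order.TTheory GRing.Theory Num.Theory.
Import numFieldNormedType.Exports.
Local Open Scope ring_scope.

Section Core.
Variable R : realType.

Lemma spectral_real n (A : 'M[R]_n) : (forall i j, A i j = A j i) ->
  exists (P : 'M[R[i]]_n) (l : 'I_n -> R), P \in unitmx /\
    map_mx (real_complex R) A = invmx P *m diag_mx (\row_i ((l i)%:C)%C) *m P.
Proof.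
move=> Asym.
set Ac := map_mx (real_complex R) A.
have herm : Ac \is hermsymmx.
  apply: realsym_hermsym.
    by apply/is_hermitianmxP; rewrite expr0 scale1r; apply/matrixP => i j; rewrite !mxE Asym.
  by apply/mxOverP => i j; rewrite mxE; apply/complex_realP; eexists.
have /orthomx_spectralP E := hermitian_normalmx herm.
have /mxOverP sreal := hermitian_spectral_diag_real herm.
exists (spectralmx Ac), (fun i => complex.Re (spectral_diag Ac 0 i)); split.
  exact: spectral_unit.
rewrite [LHS]E; congr (_ *m diag_mx _ *m _).
by apply/rowP => i; rewrite mxE RRe_real // sreal.
Qed.

Lemma scalar_ineq (l : R) : (l - 1) ^+ 2 <= 4^-1 ->
  0 < l /\ expR (- (2 * (l - 1) ^+ 2)) * (2^-1 * (l + 1)) ^+ 2 <= l.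
Proof.
move=> h.
have hx : -(2^-1) <= l - 1 by nra.
split; first by lra.
set y := (l - 1) ^+ 2.
have y0 : 0 <= y by rewrite /y sqr_ge0.
have e1 : expR (- (2 * y)) <= (1 + 2 * y)^-1.
  rewrite expRN lef_pV2 ?posrE ?expR_gt0 //; last by lra.
  exact: expR_ge1Dx.
apply: le_trans (ler_wpM2r _ e1) _; first by rewrite sqr_ge0.
rewrite mulrC -ler_pdivlMr ?invr_gt0; last by lra.
rewrite invrK /y.
have h7 : 0 <= (l - 1) ^+ 2 * (7 / 4 + 2 * (l - 1)) by apply: mulr_ge0; [exact: sqr_ge0 | lra].
nra.
Qed.

Lemma core_det n (A : 'M[R]_n) : (forall i j, A i j = A j i) ->
  \sum_i \sum_j (A i j - (i == j)%:R) ^+ 2 <= 4^-1 ->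
  0 < \det A /\ 0 < \det (2%:R^-1 *: (A + 1%:M)) /\
  expR (- (2 * \sum_i \sum_j (A i j - (i == j)%:R) ^+ 2))
     * \det (2%:R^-1 *: (A + 1%:M)) ^+ 2 <= \det A.
Proof.
move=> Asym hd.
have [P [l [Pu E]]] := spectral_real Asym.
pose f := real_complex R.
pose sim (M : 'M[R[i]]_n) := invmx P *m M *m P.
have simD M1 M2 : sim (M1 + M2) = sim M1 + sim M2.
  by rewrite /sim mulmxDr mulmxDl.
have simZ c M : sim (c *: M) = c *: sim M.
  by rewrite /sim -scalemxAr -scalemxAl.
have simM M1 M2 : sim (M1 *m M2) = sim M1 *m sim M2.
  by rewrite /sim !mulmxA mulmxK.
have sim1 : sim 1%:M = 1%:M by rewrite /sim mulmx1 mulVmx.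
have simdet M : \det (sim M) = \det M.
  rewrite /sim !det_mulmx det_inv mulrC mulrA mulfV ?mul1r //.
have simtr M : \tr (sim M) = \tr M.
  by rewrite /sim mxtrace_mulC mulmxA mulmxV // mul1mx.
have simsc (c : R[i]) : sim c%:M = c%:M by rewrite -scalemx1 simZ sim1 scalemx1.
pose D (g : R -> R) := diag_mx (\row_i ((g (l i))%:C)%C : 'rV[R[i]]_n).
have mapAff (a b : R) : map_mx f (a *: A + b%:M) = sim (D (fun x => a * x + b)).
  rewrite map_mxD map_mxZ map_scalar_mx E -/(sim _).
  have -> : D (fun x => a * x + b) = f a *: D id + (f b)%:M.
    apply/matrixP => i j; rewrite !mxE; case: (i == j); rewrite ?mulr1n ?mulr0n ?mulr0 ?addr0 //.
    by rewrite /f rmorphD rmorphM.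
  by rewrite simD simZ simsc.
have mapdet M : \det (map_mx f M) = f (\det M) by rewrite det_map_mx.
have mapprod (g : 'I_n -> R) : \det (diag_mx (\row_i ((g i)%:C)%C : 'rV[R[i]]_n)) = f (\prod_i g i).
  by rewrite det_diag /f rmorph_prod; apply: eq_bigr => i _; rewrite mxE.
have finj : injective f by apply: complexI.
have mapA : map_mx f A = sim (D id) by rewrite E.
have detA : \det A = \prod_i l i.
  by apply: finj; rewrite -mapdet mapA simdet mapprod.
have eB : 2%:R^-1 *: (A + 1%:M) = 2%:R^-1 *: A + (2%:R^-1)%:M.
  by rewrite scalerDr scalemx1.
have detB : \det (2%:R^-1 *: (A + 1%:M)) = \prod_i (2%:R^-1 * l i + 2%:R^-1).
  by apply: finj; rewrite -mapdet eB mapAff simdet mapprod.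
have eT : A - 1%:M = 1 *: A + (-1)%:M by rewrite scale1r -scaleN1r scalemx1.
have mapT : map_mx f ((A - 1%:M) *m (A - 1%:M)) = sim (D (fun x => (x - 1) ^+ 2)).
  rewrite map_mxM eT mapAff -simM; congr sim.
  rewrite /D mul_diag_mx; apply/matrixP => i j; rewrite !mxE.
  case: (i == j); rewrite ?mulr1n ?mulr0n ?mulr0 //.
  by rewrite /f -rmorphM mul1r expr2.
have maptr M : \tr (map_mx f M) = f (\tr M).
  by rewrite /mxtrace /f rmorph_sum; apply: eq_bigr => i _; rewrite mxE.
have trT : \tr ((A - 1%:M) *m (A - 1%:M)) = \sum_i (l i - 1) ^+ 2.
  apply: finj; rewrite -maptr mapT simtr mxtrace_diag /f rmorph_sum.
  by apply: eq_bigr => i _; rewrite mxE.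
have trd : \tr ((A - 1%:M) *m (A - 1%:M)) = \sum_i \sum_j (A i j - (i == j)%:R) ^+ 2.
  rewrite /mxtrace; apply: eq_bigr => i _; rewrite mxE; apply: eq_bigr => j _.
  by rewrite !mxE [A j i]Asym eq_sym expr2.
have hl i : (l i - 1) ^+ 2 <= 4^-1.
  apply: le_trans hd; rewrite -trd trT (bigD1 i) //= lerDl.
  by apply: sumr_ge0 => j _; rewrite sqr_ge0.
have sc i := scalar_ineq (hl i).
rewrite detA detB; split; last split.
- by apply: prodr_gt0 => i _; case: (sc i).
- by apply: prodr_gt0 => i _; have [h _] := sc i; lra.
rewrite -trd trT mulr_sumr -sumrN expR_sum -prodrXl -big_split /=.
apply: ler_prod => i _; have [h1 h2] := sc i; apply/andP; split.
  by apply: mulr_ge0; [exact: expR_ge0 | exact: sqr_ge0].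
by rewrite mulrDr mulr1 in h2.
Qed.
End Core.

Section An.
Variable R : realType.

Lemma dlin (c d x : R) : is_derive x 1 (fun s : R => c + s * d) d.
Proof.
have h := is_deriveD (is_derive_cst c x 1) (is_deriveM (is_derive_id x (1:R)) (is_derive_cst d x 1)).
have -> : (fun s : R => c + s * d) = cst c + (id * cst d) by apply/funext.
apply: is_derive_eq h _.
by rewrite /= add0r scaler0 add0r /GRing.scale /= mulr1.
Qed.

Lemma dln (p c d x : R) : 0 < c + x * d ->
  is_derive x 1 (fun s : R => p * ln (c + s * d)) (p * (d / (c + x * d))).
Proof.
move=> hpos.
have h1 : is_derive x 1 ((@ln R) \o (fun s : R => c + s * d)) ((c + x * d)^-1 * d).
  apply: is_derive1_comp; last exact: dlin.
  exact: is_derive1_ln.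
have h2 := is_deriveM (is_derive_cst p x 1) h1.
have -> : (fun s : R => p * ln (c + s * d)) = cst p * ((@ln R) \o (fun s : R => c + s * d)) by apply/funext.
apply: is_derive_eq h2 _.
by rewrite /= scaler0 addr0 [d / _]mulrC.
Qed.

Lemma dlnsum (V : nat) (p c d : 'I_V -> R) (x : R) : (forall v, 0 < c v + x * d v) ->
  is_derive x 1 (fun s : R => \sum_v p v * ln (c v + s * d v))
     (\sum_v p v * (d v / (c v + x * d v))).
Proof.
move=> hpos.
have h := is_derive_sum (fun v => dln (p v) (hpos v)).
rewrite fct_sumE in h.
exact: h.
Qed.

Lemma dinv (p a c d : R) : 0 < c ->
  is_derive (0:R) (1:R) (fun t : R => p * (a / (c + t * d))) (- (p * a * d / c ^+ 2)).
Proof.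
move=> c0.
have hne : (fun t : R => c + t * d) 0 != 0 by rewrite /= mul0r addr0 gt_eqF.
have h1 := @is_deriveV R (fun t : R => c + t * d) 0 _ 1 hne (dlin c d 0).
have h2 := is_deriveM (is_derive_cst (p * a) (0:R) (1:R)) h1.
have -> : (fun t : R => p * (a / (c + t * d))) = cst (p * a) * (fun y => ((fun t : R => c + t * d) y)^-1).
  by apply/funext => t /=; rewrite mulrA.
apply: is_derive_eq h2 _.
rewrite /= scaler0 addr0 /GRing.scale /= mul0r addr0.
by rewrite mulNr mulrN; congr (- _); rewrite [c ^- 2 * d]mulrC mulrA.
Qed.

Lemma dinvsum (V : nat) (p a c d : 'I_V -> R) : (forall v, 0 < c v) ->
  is_derive (0:R) (1:R) (fun t : R => \sum_v p v * (a v / (c v + t * d v)))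
     (- \sum_v p v * a v * d v / c v ^+ 2).
Proof.
move=> hpos.
have h := is_derive_sum (fun v => dinv (p v) (a v) (d v) (hpos v)).
rewrite fct_sumE sumrN in h.
exact: h.
Qed.

Lemma sum_delta (K : nat) (f : 'I_K -> R) (i : 'I_K) :
  \sum_k (k == i)%:R * f k = f i.
Proof.
rewrite (bigD1 i) //= eqxx mul1r big1 ?addr0 // => k /negbTE ->.
by rewrite mul0r.
Qed.

Lemma shift2_sum (K V : nat) (th : 'I_K -> R) (phi : 'I_K -> 'I_V -> R) i j s t v :
  \sum_k shift2 th i j s t k * phi k v =
  \sum_k th k * phi k v + s * phi i v + t * phi j v.
Proof.
rewrite /shift2.
under eq_bigr => k _ do rewrite !mulrDl -!mulrA.
by rewrite !big_split /= -!mulr_sumr !sum_delta.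
Qed.

Lemma Hfun_shift2 (K V : nat) (p : 'I_V -> R) (th : 'I_K -> R) (phi : 'I_K -> 'I_V -> R) i j t :
  (fun s => Hfun p phi (shift2 th i j s t)) =
  (fun s => \sum_v p v * ln ((\sum_k th k * phi k v + t * phi j v) + s * phi i v)).
Proof.
apply/funext => s; rewrite /Hfun; apply: eq_bigr => v _.
by rewrite shift2_sum addrAC.
Qed.

Lemma hess_entry (K V : nat) (p : 'I_V -> R) (phi : 'I_K -> 'I_V -> R)
  (th : 'I_K -> R) i j :
  (forall k, 0 < th k) -> (forall k v, 0 < phi k v) ->
  hessH p phi th i j =
  - \sum_v p v * phi i v * phi j v / (\sum_k th k * phi k v) ^+ 2.
Proof.
move=> thp php.
set S := fun v => \sum_k th k * phi k v.
have SP v k : th k * phi k v <= S v.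
  rewrite /S (bigD1 k) //= lerDl; apply: sumr_ge0 => l _.
  by apply: mulr_ge0; apply: ltW.
have Spos v : 0 < S v.
  apply: lt_le_trans (SP v j); exact: mulr_gt0.
rewrite mxE.
pose g := fun t : R => \sum_v p v * (phi i v / (S v + t * phi j v)).
have near_eq : \forall t \near (0:R), derive1 (fun s => Hfun p phi (shift2 th i j s t)) 0 = g t.
  near=> t.
  have ht : - th j < t.
    near: t; apply: lt_nbhsr; rewrite oppr_lt0; exact: thp.
  have pos v : 0 < (S v + t * phi j v) + 0 * phi i v.
    rewrite mul0r addr0.
    apply: lt_le_trans (_ : (th j + t) * phi j v <= _).
      apply: mulr_gt0 => //; lra.
    by rewrite mulrDl lerD2r.
  rewrite Hfun_shift2 derive1E.
  have [_ ->] := dlnsum p pos.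
  by apply: eq_bigr => v _; rewrite mul0r addr0.
rewrite derive1E (near_eq_derive _ near_eq).
have [_ ->] := dinvsum p (fun v => phi i v) (fun v => phi j v) Spos.
done.
Unshelve. all: by end_near.
Qed.

Lemma sum_delta1 (K : nat) (i : 'I_K) : \sum_k (k == i)%:R = 1 :> R.
Proof.
rewrite (bigD1 i) //= eqxx big1 ?addr0 // => k /negbTE -> //.
Qed.

Lemma stationary (K V : nat) (p : 'I_V -> R) (phi : 'I_K -> 'I_V -> R)
  (th : 'I_K -> R) :
  (forall k, 0 < th k) -> (forall k v, 0 < phi k v) -> in_simplex th ->
  in_simplex p ->
  (forall theta, in_simplex theta -> Hfun p phi theta <= Hfun p phi th) ->
  forall k0 k : 'I_K, \sum_v p v * (phi k v / \sum_l th l * phi l v) = 1.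
Proof.
move=> thp php [th0 th1] [p0 p1] hmax k0.
set S := fun v => \sum_l th l * phi l v.
have SP v k : th k * phi k v <= S v.
  rewrite /S (bigD1 k) //= lerDl; apply: sumr_ge0 => l _.
  by apply: mulr_ge0; apply: ltW.
have Spos v (k : 'I_K) : 0 < S v.
  apply: lt_le_trans (SP v k); exact: mulr_gt0.
set g := fun k => \sum_v p v * (phi k v / S v).
have geq k l : g k = g l.
  pose m := Num.min (th k) (th l).
  have m0 : 0 < m by rewrite /m lt_min !thp.
  have mk : m <= th k by rewrite /m ge_min lexx.
  have ml : m <= th l by rewrite /m ge_min lexx orbT.
  pose f := fun s => Hfun p phi (shift2 th k l s (- s)).
  have fE : f = fun s => \sum_v p v * ln (S v + s * (phi k v - phi l v)).
    apply/funext => s; rewrite /f /Hfun; apply: eq_bigr => v _.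
    by rewrite shift2_sum mulNr mulrBr addrA.
  have pos t : - m < t < m -> forall v, 0 < S v + t * (phi k v - phi l v).
    move=> /andP[h1 h2] v.
    have := SP v k; have := SP v l; have := php k v; have := php l v.
    case: (leP 0 t) => ht; nra.
  have itv t : (t \in `]- m, m[) = (- m < t < m) by rewrite in_itv.
  have dmax : is_derive (0:R) (1:R) f 0.
    apply: (@derive1_at_max _ f (- m) m 0).
    - lra.
    - move=> t; rewrite itv => ht; rewrite fE.
      by have [h _] := dlnsum p (pos t ht).
    - by rewrite itv; lra.
    move=> t; rewrite itv => /andP[h1 h2].
    have -> : f 0 = Hfun p phi th.
      rewrite /f; congr Hfun; apply/funext => x.
      by rewrite /shift2 oppr0 !mul0r !addr0.
    apply: hmax; split.
      move=> x; rewrite /shift2.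
      have := th0 x.
      case hk: (x == k); case hl: (x == l); rewrite /= ?mulr1 ?mulr0 ?addr0; try lra.
      + by move/eqP: hk => ->; lra.
      + by move/eqP: hl => ->; lra.
    rewrite /shift2 !big_split /= -!mulr_sumr !sum_delta1 th1; lra.
  have dval := dlnsum p (pos 0 ltac:(lra)).
  rewrite -fE in dval.
  have : 'D_1 f 0 = 0 by case: dmax.
  case: dval => _ ->.
  under eq_bigr do rewrite mul0r addr0 mulrBl mulrBr.
  rewrite sumrB => /eqP; rewrite subr_eq0 => /eqP.
  done.
have key : \sum_k th k * g k = 1.
  rewrite /g; under eq_bigr do rewrite mulr_sumr.
  rewrite exchange_big /= -p1; apply: eq_bigr => v _.
  transitivity (\sum_k p v / S v * (th k * phi k v)).
    by apply: eq_bigr => k _; ring.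
  rewrite -mulr_sumr -/(S v) mulrAC -mulrA mulfV ?mulr1 //.
  by rewrite gt_eqF // (Spos v k0).
have e2 : \sum_k th k * g k = g k0.
  rewrite (eq_bigr (fun k => th k * g k0)); last by move=> k _; rewrite (geq k k0).
  by rewrite -mulr_suml th1 mul1r.
move=> k; rewrite -/(g k) (geq k k0) -e2 key //.
Qed.


Lemma rho2_reduce (K : nat) (th : 'I_K -> R) (A Q : 'M[R]_K) :
  (forall k, 0 < th k) ->
  (forall i j, Q i j = - (A i j / (Num.sqrt (th i) * Num.sqrt (th j)))) ->
  rho2 Q (Rmat th) = Num.sqrt `|\det A| / `|\det (2%:R^-1 *: (A + 1%:M))|.
Proof.
move=> thp hQ.
set sq := fun k => Num.sqrt (th k).
have sqp k : 0 < sq k by rewrite /sq sqrtr_gt0.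
have sq2 k : sq k ^+ 2 = th k by rewrite /sq sqr_sqrtr // ltW.
set Sinv := diag_mx (\row_k (sq k)^-1).
set cj := fun M : 'M[R]_K => \matrix_(i, j) ((sq i)^-1 * M i j * (sq j)^-1).
have conjE M : Sinv *m M *m Sinv = cj M.
  by apply/matrixP => i j; rewrite mul_mx_diag mul_diag_mx !mxE.
have hQ' : Q = - (Sinv *m A *m Sinv).
  apply/matrixP => i j; rewrite conjE hQ !mxE -/(sq i) -/(sq j).
  have := sqp i; have := sqp j; move=> h1 h2.
  by field; rewrite !gt_eqF.
have hR : Rmat th = - (Sinv *m 1%:M *m Sinv).
  apply/matrixP => i j; rewrite conjE !mxE.
  case: eqP => [->|_]; rewrite ?mulr1n ?mulr0n ?mulr0 ?mul0r ?oppr0 //.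
  by rewrite mulr1 -invfM -expr2 sq2.
have hB : 2%:R^-1 *: (Q + Rmat th) = - (Sinv *m (2%:R^-1 *: (A + 1%:M)) *m Sinv).
  apply/matrixP => i j; rewrite hQ' hR !conjE !mxE.
  by ring.
set u := \det Sinv.
have detE M : \det (- (Sinv *m M *m Sinv)) = (-1) ^+ K * u ^+ 2 * \det M.
  by rewrite -scaleN1r detZ !det_mulmx /u; ring.
have u0 : u != 0.
  rewrite /u det_diag; apply/prodf_neq0 => k _; rewrite mxE invr_eq0 gt_eqF //.
have nE x : `|(-1) ^+ K * u ^+ 2 * x| = u ^+ 2 * `|x|.
  by rewrite !normrM normrX normrN1 expr1n mul1r -normrM -expr2 ger0_norm // sqr_ge0.
rewrite /rho2 hB hR hQ' !detE det1 !nE normr1 mulr1.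
rewrite sqrtrM ?sqr_ge0 //.
set w := Num.sqrt (u ^+ 2).
have w2 : w * w = u ^+ 2 by rewrite -expr2 /w sqr_sqrtr // sqr_ge0.
rewrite -w2.
have w0 : w != 0 by rewrite /w sqrtr_eq0 -ltNge lt_def sqr_ge0 andbT sqrf_eq0 u0.
have [->|b0] := eqVneq `|\det (2%:R^-1 *: (A + 1%:M))| 0.
  by rewrite !mulr0 !invr0 !mulr0.
by field; rewrite b0 w0.
Qed.
End An.

Section Sc.
Variable R : realType.

Lemma diag_case_eq (tm tM C2 e F S Th : R) : 0 < tm -> tm <= Th -> C2 * tm ^+ 2 = tM ->
  0 <= C2 -> 0 <= e -> 0 < F -> Th * F <= S -> S - Th * F <= tM * e * F ->
  F * (S - Th * F) <= C2 * e * S ^+ 2.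
Proof.
move=> tm0 tmTh hC2 C20 e0 F0 hS hD.
have h1 : F * (S - Th * F) <= C2 * e * (tm * F) ^+ 2.
  apply: le_trans (_ : F * (tM * e * F) <= _).
    by apply: ler_wpM2l; [exact: ltW|].
  have -> : F * (tM * e * F) = C2 * e * (tm * F) ^+ 2 by rewrite -hC2; ring.
  exact: lexx.
apply: le_trans h1 _.
apply: ler_wpM2l; first exact: mulr_ge0.
have h2 : 0 <= tm * F by apply: mulr_ge0; apply: ltW.
apply: lerXn2r; rewrite ?nnegrE //; nra.
Qed.

Lemma diag_case_ne (tm tM C2 e F S Th Fk : R) : 0 < tm -> tm <= tM -> C2 * tm ^+ 2 = tM ->
  0 <= C2 -> 0 <= e -> 0 < F -> 0 < Th -> 0 < Fk -> Th * F <= S -> tm * Fk <= S -> F <= e * Fk ->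
  F * (S - Th * F) <= C2 * e * S ^+ 2.
Proof.
move=> tm0 tmtM hC2 C20 e0 F0 Th0 Fk0 hS hSk hF.
have S0 : 0 < S by nra.
apply: le_trans (_ : F * S <= _); first by nra.
apply: le_trans (_ : e * Fk * S <= _); first by nra.
have h : Fk <= C2 * S.
  have : 1 <= C2 * tm by nra.
  nra.
have h' : 0 <= (C2 * S - Fk) * (e * S).
  by apply: mulr_ge0; [rewrite subr_ge0 | apply: mulr_ge0; lra].
nra.
Qed.

Lemma off_case_eq (tm tM C1 e Fi Fj S si sj : R) : 0 < tm -> 0 <= e ->
  0 < Fi -> 0 < Fj -> si ^+ 2 * Fi <= S -> 0 < si -> 0 <= sj ->
  Num.sqrt tm <= si -> sj <= Num.sqrt tM -> C1 * (tm * Num.sqrt tm) = Num.sqrt tM ->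
  0 <= C1 -> Fj <= e * Fi ->
  si * sj * Fi * Fj <= C1 * e * S ^+ 2.
Proof.
move=> tm0 e0 Fi0 Fj0 hS si0 sj0 hsi hsj hC1 C10 hF.
set r := Num.sqrt tm.
have r0 : 0 < r by rewrite /r sqrtr_gt0.
have r2 : r ^+ 2 = tm by rewrite /r sqr_sqrtr // ltW.
have h1 : sj <= C1 * si ^+ 3.
  apply: le_trans hsj _; rewrite -hC1 -/r -{1}r2.
  apply: ler_wpM2l => //.
  have : r ^+ 3 <= si ^+ 3 by apply: lerXn2r; rewrite ?nnegrE ?(ltW r0) ?(ltW si0).
  by rewrite (_ : r ^+ 2 * r = r ^+ 3) //; ring.
apply: le_trans (_ : si * sj * Fi * (e * Fi) <= _).
  by apply: ler_wpM2l => //; apply: mulr_ge0 (mulr_ge0 (ltW si0) sj0) (ltW Fi0).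
apply: le_trans (_ : C1 * si ^+ 3 * si * e * Fi ^+ 2 <= _).
  rewrite (_ : si * sj * Fi * (e * Fi) = sj * (si * e * Fi ^+ 2)); last by ring.
  rewrite (_ : C1 * si ^+ 3 * si * e * Fi ^+ 2 = C1 * si ^+ 3 * (si * e * Fi ^+ 2)); last by ring.
  by apply: ler_wpM2r => //; apply: mulr_ge0; [apply: mulr_ge0; [exact: ltW|exact: e0] | exact: sqr_ge0].
rewrite (_ : C1 * si ^+ 3 * si * e * Fi ^+ 2 = C1 * e * (si ^+ 2 * Fi) ^+ 2); last by ring.
apply: ler_wpM2l; first exact: mulr_ge0.
apply: lerXn2r; rewrite ?nnegrE //; first by apply: mulr_ge0; rewrite ?sqr_ge0 ?ltW.
nra.
Qed.

Lemma off_case_ne (tm tM C2 e Fi Fj Fk S si sj : R) : 0 < tm -> 0 <= e -> C2 * tm ^+ 2 = tM ->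
  0 <= C2 -> 0 < Fi -> 0 < Fj -> 0 < Fk -> tm * Fk <= S -> 0 <= si -> 0 <= sj ->
  si * sj <= tM -> Fi <= e * Fk -> Fj <= e * Fk ->
  si * sj * Fi * Fj <= C2 * e ^+ 2 * S ^+ 2.
Proof.
move=> tm0 e0 hC2 C20 Fi0 Fj0 Fk0 hS si0 sj0 hs hi hj.
have hij : Fi * Fj <= (e * Fk) ^+ 2.
  by rewrite expr2; apply: ler_pM => //; apply: ltW.
apply: le_trans (_ : tM * (e * Fk) ^+ 2 <= _).
  rewrite -mulrA; apply: ler_pM => //; [exact: mulr_ge0 | apply: mulr_ge0; [exact: ltW|exact: ltW]].
rewrite -hC2 (_ : C2 * tm ^+ 2 * (e * Fk) ^+ 2 = C2 * e ^+ 2 * (tm * Fk) ^+ 2); last by ring.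
apply: ler_wpM2l; first by apply: mulr_ge0; rewrite ?sqr_ge0.
apply: lerXn2r; rewrite ?nnegrE //; first by apply: mulr_ge0; rewrite ?ltW.
nra.
Qed.
End Sc.

Lemma avg_le (R : realType) (V : nat) (p T : 'I_V -> R) (M : R) :
  (forall v, 0 <= p v) -> \sum_v p v = 1 -> (forall v, 0 <= T v <= M) ->
  0 <= \sum_v p v * T v <= M.
Proof.
move=> p0 p1 hT; apply/andP; split.
  apply: sumr_ge0 => v _; apply: mulr_ge0 => //; by case/andP: (hT v).
apply: le_trans (_ : \sum_v p v * M <= _).
  apply: ler_sum => v _; apply: ler_wpM2l => //; by case/andP: (hT v).
by rewrite -mulr_suml p1 mul1r.
Qed.

Theorem theorem6 (R : realType) (K : nat) (thetas : 'I_K -> R) (eps0 : R) :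
  (3 < K)%N ->
  (forall k, 0 < thetas k) -> in_simplex thetas ->
  0 < eps0 -> eps0 * Num.sqrt (Ffun thetas eps0) = 2%:R^-1 ->
  exists C : R, 0 < C /\
  forall (V : nat) (phi : 'I_K -> 'I_V -> R) (p : 'I_V -> R)
         (kv : 'I_V -> 'I_K),
    (1 <= V)%N ->
    (forall k, in_simplex (phi k)) ->
    (forall k v, 0 < phi k v) ->
    in_simplex p ->
    (forall theta, in_simplex theta -> Hfun p phi theta <= Hfun p phi thetas) ->
    B1 phi kv ->
    sparsity phi kv < eps0 ->
    expR (- (C ^+ 2 * (sparsity phi kv) ^+ 2))
      <= rho2 (hessH p phi thetas) (Rmat thetas).
Proof.
move=> K3 thp ths eps0p heps0.
have K0 : (0 < K)%N by apply: leq_trans K3.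
pose k0 : 'I_K := Ordinal K0.
set tm := theta_min thetas.
set tM := theta_max thetas.
have tm0 : 0 < tm.
  rewrite /tm /theta_min; apply: (big_ind (fun x => 0 < x)) => //.
  by move=> x y hx hy; rewrite lt_min hx hy.
have tmle k : tm <= thetas k by rewrite /tm /theta_min; exact: bigmin_le.
have tMge k : thetas k <= tM by rewrite /tM /theta_max; exact: le_bigmax.
have tmtM : tm <= tM := le_trans (tmle k0) (tMge k0).
have tM0 : 0 < tM by lra.
set C1 := C1max thetas.
set C2 := C2max thetas.
have hC2 : C2 * tm ^+ 2 = tM.
  by rewrite /C2 /C2max -/tm -/tM mulfVK // expf_neq0 // gt_eqF.
have C20 : 0 <= C2 by rewrite /C2 /C2max divr_ge0 ?sqr_ge0 // ltW.
have stm0 : 0 < Num.sqrt tm by rewrite sqrtr_gt0.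
have hC1 : C1 * (tm * Num.sqrt tm) = Num.sqrt tM.
  by rewrite /C1 /C1max -/tm -/tM mulfVK // mulf_neq0 // gt_eqF.
have C10 : 0 <= C1 by rewrite /C1 /C1max divr_ge0 ?sqrtr_ge0 // mulr_ge0 // ltW.
set F0 := Ffun thetas eps0.
have F0pos : 0 < F0.
  have sF : Num.sqrt F0 != 0.
    by apply/eqP => h; move: heps0; rewrite h mulr0 => /eqP; rewrite eq_sym invr_eq0 pnatr_eq0.
  by rewrite -sqrtr_gt0 lt_def sF sqrtr_ge0.
exists (Num.sqrt F0); split; first by rewrite sqrtr_gt0.
move=> V phi p kv V1 phis phip ps hmax hB1 hsp.
set e := sparsity phi kv.
have e0 : 0 <= e by rewrite /e /sparsity; exact: bigmax_ge_id.
have esp v : \sum_(j < K | j != kv v) phi j v <= e * phi (kv v) v.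
  have h := le_bigmax 0 (fun v => (\sum_(j < K | j != kv v) phi j v) / phi (kv v) v) v.
  by rewrite -ler_pdivrMr // h.
have ephi v j : j != kv v -> phi j v <= e * phi (kv v) v.
  move=> hj; apply: le_trans (esp v).
  rewrite (bigD1 j) //= lerDl; apply: sumr_ge0 => l _; exact: ltW.
set S := fun v => \sum_k thetas k * phi k v.
have SP v k : thetas k * phi k v <= S v.
  rewrite /S (bigD1 k) //= lerDl; apply: sumr_ge0 => l _.
  by apply: mulr_ge0; apply: ltW.
have Spos v : 0 < S v.
  apply: lt_le_trans (SP v k0); exact: mulr_gt0.
have SD v : S v - thetas (kv v) * phi (kv v) v <= tM * e * phi (kv v) v.
  rewrite /S (bigD1 (kv v)) //= addrAC subrr add0r.
  apply: le_trans (_ : \sum_(l < K | l != kv v) tM * phi l v <= _).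
    apply: ler_sum => l _; apply: ler_wpM2r; [exact: ltW | exact: tMge].
  by rewrite -mulr_sumr -mulrA; apply: ler_wpM2l; [exact: ltW | exact: esp].
have stat := stationary thp phip ths ps hmax k0.
set sq := fun k => Num.sqrt (thetas k).
have sqp k : 0 < sq k by rewrite /sq sqrtr_gt0.
have sq2 k : sq k * sq k = thetas k by rewrite -expr2 /sq sqr_sqrtr // ltW.
pose A := \matrix_(i, j) (sq i * sq j * \sum_v p v * phi i v * phi j v / S v ^+ 2).
have hQ i j : hessH p phi thetas i j = - (A i j / (sq i * sq j)).
  rewrite (hess_entry p i j thp phip) /A mxE; congr (- _).
  have := sqp i; have := sqp j => h1 h2.
  by field; rewrite !gt_eqF.
have Asym i j : A i j = A j i.
  rewrite /A !mxE [sq j * sq i]mulrC; congr (_ * _); apply: eq_bigr => v _; ring.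
have [p0 p1] := ps.
have diagB i : (A i i - (i == i)%:R) ^+ 2 <= (C2 * e) ^+ 2.
  have dE : 1 - A i i = \sum_v p v * (phi i v * (S v - thetas i * phi i v) / S v ^+ 2).
    rewrite -{1}(stat i) /A mxE sq2 mulr_sumr -sumrB; apply: eq_bigr => v _.
    have := Spos v => h; rewrite -/(S v); by field; rewrite gt_eqF.
  have hb : 0 <= 1 - A i i <= C2 * e.
    rewrite dE; apply: avg_le => // v.
    have hS2 : 0 < S v ^+ 2 by rewrite exprn_gt0.
    apply/andP; split.
      apply: divr_ge0; last exact: ltW.
      by apply: mulr_ge0; [exact: ltW | rewrite subr_ge0].
    rewrite ler_pdivrMr //.
    have [hk|hk] := eqVneq (kv v) i.
      by rewrite -hk; apply: (@diag_case_eq _ tm tM).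
    apply: (@diag_case_ne _ tm tM C2 e _ _ _ (phi (kv v) v)) => //.
    - apply: le_trans (SP v (kv v)); apply: ler_wpM2r; [exact: ltW | exact: tmle].
    - by apply: ephi; rewrite eq_sym.
  rewrite eqxx; case/andP: hb => h1 h2.
  rewrite -sqrrN opprB; apply: lerXn2r; rewrite ?nnegrE //; exact: le_trans h2.
have sqlo k : Num.sqrt tm <= sq k by rewrite /sq ler_sqrt; [exact: tmle | exact: ltW (thp k)].
have sqhi k : sq k <= Num.sqrt tM by rewrite /sq ler_sqrt ?tMge // ltW.
have sqS v k : sq k ^+ 2 * phi k v <= S v by rewrite expr2 sq2 SP.
have sqM i j : sq i * sq j <= tM.
  rewrite -[tM]sqr_sqrtr ?(ltW tM0) // expr2.
  by apply: ler_pM; rewrite ?sqhi // ltW.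
have coef1 : C1 * e <= (2%:R * C1 + C2 * e) * e by nra.
have coef2 : C2 * e ^+ 2 <= (2%:R * C1 + C2 * e) * e by nra.
have offB i j : i != j -> (A i j - (i == j)%:R) ^+ 2 <= ((2%:R * C1 + C2 * e) * e) ^+ 2.
  move=> ij; rewrite (negbTE ij) subr0.
  have aE : A i j = \sum_v p v * (sq i * sq j * phi i v * phi j v / S v ^+ 2).
    rewrite /A mxE mulr_sumr; apply: eq_bigr => v _; ring.
  have hb : 0 <= A i j <= (2%:R * C1 + C2 * e) * e.
    rewrite aE; apply: avg_le => // v.
    have hS2 : 0 < S v ^+ 2 by rewrite exprn_gt0.
    have si0 := sqp i; have sj0 := sqp j.
    have Fi0 := phip i v; have Fj0 := phip j v.
    apply/andP; split.
      apply: divr_ge0; last exact: ltW.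
      by apply: mulr_ge0; [apply: mulr_ge0; [apply: mulr_ge0|]|]; apply: ltW.
    rewrite ler_pdivrMr //.
    have [hk|hk] := eqVneq (kv v) i.
      apply: le_trans (_ : C1 * e * S v ^+ 2 <= _); last first.
        by apply: ler_wpM2r; [exact: ltW | exact: coef1].
      apply: (@off_case_eq _ tm tM) => //; first exact: ltW.
      by rewrite -hk; apply: ephi; rewrite hk eq_sym.
    have [hk'|hk'] := eqVneq (kv v) j.
      apply: le_trans (_ : C1 * e * S v ^+ 2 <= _); last first.
        by apply: ler_wpM2r; [exact: ltW | exact: coef1].
      rewrite (_ : sq i * sq j * phi i v * phi j v = sq j * sq i * phi j v * phi i v); last by ring.
      apply: (@off_case_eq _ tm tM) => //; first exact: ltW.
      by rewrite -hk'; apply: ephi; rewrite hk'.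
    apply: le_trans (_ : C2 * e ^+ 2 * S v ^+ 2 <= _); last first.
      by apply: ler_wpM2r; [exact: ltW | exact: coef2].
    apply: (off_case_ne tm0 e0 hC2 C20 Fi0 Fj0 (phip (kv v) v) _ (ltW si0) (ltW sj0) (sqM i j)).
    - by apply: le_trans (SP v (kv v)); apply: ler_wpM2r; [exact: ltW | exact: tmle].
    - by apply: ephi; rewrite eq_sym.
    - by apply: ephi; rewrite eq_sym.
  case/andP: hb => h1 h2.
  apply: lerXn2r; rewrite ?nnegrE //; exact: le_trans h2.
set X := ((2%:R * C1 + C2 * e) * e) ^+ 2.
have K4 : 4%:R <= K%:R :> R by rewrite ler_nat.
have dB : \sum_i \sum_j (A i j - (i == j)%:R) ^+ 2 <= K%:R * ((C2 * e) ^+ 2 + (K%:R - 1) * X).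
  apply: le_trans (_ : \sum_(i < K) ((C2 * e) ^+ 2 + (K%:R - 1) * X) <= _); last first.
    by rewrite sumr_const card_ord mulr_natl.
  apply: ler_sum => i _; rewrite (bigD1 i) //=; apply: lerD; first exact: diagB.
  apply: le_trans (_ : \sum_(j < K | j != i) X <= _).
    by apply: ler_sum => j hj; apply: offB; rewrite eq_sym.
    have e1 : \sum_(j < K) X = X + \sum_(j < K | j != i) X by rewrite (bigD1 i).
    have e2 : \sum_(j < K) X = K%:R * X by rewrite sumr_const card_ord mulr_natl.
    have -> : \sum_(j < K | j != i) X = (K%:R - 1) * X by rewrite mulrBl mul1r -e2 e1; ring.
    exact: lexx.
have dF : \sum_i \sum_j (A i j - (i == j)%:R) ^+ 2 <= e ^+ 2 * Ffun thetas e.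
  apply: le_trans dB _; rewrite /Ffun -/C1 -/C2 /X.
  have : 0 <= K%:R * (C2 * e) ^+ 2 :> R by apply: mulr_ge0; rewrite ?sqr_ge0 // ler0n.
  nra.
have heps : e < eps0 := hsp.
have FeF0 : Ffun thetas e <= F0.
  rewrite /F0 /Ffun -/C1 -/C2 lerD2l.
  apply: ler_wpM2l; first by apply: mulr_ge0; lra.
  apply: lerXn2r; rewrite ?nnegrE; try (apply: addr_ge0; apply: mulr_ge0; lra).
  by rewrite lerD2l; apply: ler_wpM2l => //; exact: ltW.
have hF0 : eps0 ^+ 2 * F0 = 4^-1.
  by rewrite -[F0]sqr_sqrtr ?(ltW F0pos) // -exprMn heps0; lra.
have d14 : \sum_i \sum_j (A i j - (i == j)%:R) ^+ 2 <= 4^-1.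
  apply: le_trans dF _; rewrite -hF0.
  apply: le_trans (_ : e ^+ 2 * F0 <= _).
    by apply: ler_wpM2l; [exact: sqr_ge0 | exact: FeF0].
  by apply: ler_wpM2r; [exact: ltW | apply: lerXn2r; rewrite ?nnegrE //; lra].
have [a0 [b0 hab]] := core_det Asym d14.
set d := \sum_i \sum_j (A i j - (i == j)%:R) ^+ 2 in dF d14 hab.
rewrite (rho2_reduce thp hQ) (ger0_norm (ltW a0)) (ger0_norm (ltW b0)).
apply: le_trans (_ : expR (- d) <= _).
  rewrite ler_expR lerN2 sqr_sqrtr ?(ltW F0pos) //.
  apply: le_trans dF _; rewrite mulrC; apply: ler_wpM2r; [exact: sqr_ge0 | exact: FeF0].
rewrite ler_pdivlMr //.
have eb0 : 0 <= expR (- d) * \det (2%:R^-1 *: (A + 1%:M)).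
  by apply: mulr_ge0; [exact: expR_ge0 | exact: ltW].
rewrite -[X in X <= _](ger0_norm eb0) -sqrtr_sqr ler_sqrt; last exact: ltW.
apply: le_trans hab; rewrite exprMn expr2 -expRD.
by have -> : - d - d = - (2 * d) by ring.
Qed.
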